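(* Let $d$ be even, let $\nu:\mathbb R\to\mathbb R$ satisfy $\nu(x+y)=\nu(x)+\nu(y)$ for all $x,y$, and let $A\in\mathbb R^{d\times d}$ be invertible. Suppose $S(x):=AQ_d^\nu(x)A^{-1}$ is an orthogonal matrix for every $x\ge0$ (with respect to the standard inner product on $\mathbb R^d$). Then there exists an orthogonal matrix $U\in\mathbb R^{d\times d}$ such that $S(x)=UQ_d^\nu(x)U^{\mathrm T}$ for all $x\ge0$.
   Context: For $\theta\in\mathbb R$, $Q(\theta)=\begin{pmatrix}\cos\theta&\sin\theta\\-\sin\theta&\cos\theta\end{pmatrix}$, and for even $k$, $Q_k^\nu(x)\in\mathbb R^{k\times k}$ is the block-diagonal matrix with $k/2$ diagonal blocks all equal to $Q(\nu(x))$. *)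

(* Defs.v *)
From HB Require Import structures.
From mathcomp Require Import all_boot all_order all_algebra.
From mathcomp Require Import all_classical all_reals all_analysis.
Set Implicit Arguments. Unset Strict Implicit. Unset Printing Implicit Defensive.
Import Order.TTheory GRing.Theory Num.Theory.
Local Open Scope ring_scope.

Definition Q2 (R : realType) (t : R) : 'M[R]_2 :=
  \matrix_(i < 2, j < 2)
    (if (i == j) then cos t else if (i == 0 :> nat) then sin t else - sin t).

(* Q_d^nu(x): block diagonal d x d matrix with d/2 blocks Q(nu x);
   entry (i,j) lies in block i./2 = j./2, at position (i mod 2, j mod 2). *)
Definition Qd (R : realType) (d : nat) (nu : R -> R) (x : R) : 'M[R]_d :=
  \matrix_(i < d, j < d)
    (if (i./2 == j./2)%N
     then Q2 (nu x) (inord (odd i)) (inord (odd j))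
     else 0).

Definition orthogonal_mx (R : realType) (d : nat) (M : 'M[R]_d) : Prop :=
  M *m M^T = 1%:M.

(* Main.v *)
Require Import Defs.
From HB Require Import structures.
From mathcomp Require Import all_boot all_order all_algebra.
From mathcomp Require Import all_classical all_reals all_analysis.
From mathcomp Require Import zify ring lra.
Import Order.TTheory GRing.Theory Num.Theory.
Local Open Scope ring_scope.
Set Implicit Arguments. Unset Strict Implicit. Unset Printing Implicit Defensive.

Section Main.
Variable R : realType.
Variable d : nat.
Hypothesis hd : ~~ odd d.

Definition dot (u v : 'rV[R]_d) : R := (u *m v^T) 0 0.

Lemma dotE u v : dot u v = \sum_l u 0 l * v 0 l.
Proof. by rewrite /dot !mxE; apply: eq_bigr => l _; rewrite mxE. Qed.

Lemma dotC u v : dot u v = dot v u.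
Proof. by rewrite !dotE; apply: eq_bigr => l _; rewrite mulrC. Qed.

Lemma dotZl a u v : dot (a *: u) v = a * dot u v.
Proof. by rewrite !dotE mulr_sumr; apply: eq_bigr => l _; rewrite mxE mulrA. Qed.

Lemma dotNl u v : dot (- u) v = - dot u v.
Proof. by rewrite !dotE -sumrN; apply: eq_bigr => l _; rewrite mxE mulNr. Qed.

Lemma dot_mulmx u v (K : 'M[R]_d) : dot u (v *m K) = dot (u *m K^T) v.
Proof. by rewrite /dot trmx_mul mulmxA. Qed.

Lemma mx_dot (W V : 'M[R]_d) i j : (W *m V^T) i j = dot (row i W) (row j V).
Proof. by rewrite dotE mxE; apply: eq_bigr => l _; rewrite !mxE. Qed.

Lemma rowv_dot v (W : 'M[R]_d) i : (v *m W^T) 0 i = dot v (row i W).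
Proof. by rewrite dotE mxE; apply: eq_bigr => l _; rewrite !mxE. Qed.

Lemma dot_gt0 v : v != 0 -> 0 < dot v v.
Proof.
move=> nz; rewrite lt_def; apply/andP; split; last first.
  by rewrite dotE; apply: sumr_ge0 => l _; rewrite -expr2 sqr_ge0.
apply: contra nz; rewrite dotE psumr_eq0; last by move=> l _; rewrite -expr2 sqr_ge0.
move=> /allP H; apply/eqP/rowP => l; have := H l (mem_index_enum l).
by rewrite mulf_eq0 orbb mxE => /eqP.
Qed.

Definition sgnb (b : bool) : R := if b then -1 else 1.

Definition Jm : 'M[R]_d := \matrix_(i, j)
  (if (i./2 == j./2)%N then (if odd i == odd j then 0 else sgnb (odd i)) else 0).

Lemma pi_lt (i : 'I_d) : ((if odd i then i.-1 else i.+1) < d)%N.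
Proof.
case: ifP => oi; first by have := ltn_ord i; lia.
move: (nat_of_ord i) oi (ltn_ord i) hd => n oi lt hd'.
case: (ltngtP n.+1 d) => [//|e|e]; first lia.
by move: hd'; rewrite -e /= oi.
Qed.

Definition pi (i : 'I_d) : 'I_d := Ordinal (pi_lt i).

Lemma piE i : (pi i : nat) = if odd i then i.-1 else i.+1.
Proof. by []. Qed.

Lemma odd_pi i : odd (pi i) = ~~ odd i.
Proof.
rewrite piE; case: ifP => oi //=; last by rewrite oi.
by move: oi; case: (nat_of_ord i) => //= n; case: (odd n).
Qed.

Lemma piK i : pi (pi i) = i.
Proof.
apply: val_inj; rewrite [LHS]piE odd_pi piE.
by case: i => -[|n] lt //=; case: (odd n).
Qed.

Lemma pairP (i l : nat) :
  ((i./2 == l./2) && (odd i != odd l)) = (l == if odd i then i.-1 else i.+1).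
Proof.
have hi := odd_double_half i; have hl := odd_double_half l.
case: (odd i) hi => hi; case: (odd l) hl => hl /=; lia.
Qed.

Lemma JmE i l : Jm i l = if l == pi i then sgnb (odd i) else 0.
Proof.
rewrite mxE -(inj_eq val_inj) /= -pairP.
by case: (i./2 == l./2)%N; case: (odd i == odd l).
Qed.


Lemma sum_single (F : 'I_d -> R) p :
  (forall l, l != p -> F l = 0) -> \sum_l F l = F p.
Proof. by move=> H; rewrite (bigD1 p) //= big1 ?addr0. Qed.

Lemma JmE' l j : Jm l j = if l == pi j then - sgnb (odd j) else 0.
Proof.
rewrite JmE; have -> : (j == pi l) = (l == pi j).
  by apply/eqP/eqP => ->; rewrite piK.
by case: eqP => // ->; rewrite odd_pi /sgnb; case: (odd j); rewrite ?opprK.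
Qed.

Lemma Jm_mulL (X : 'M[R]_d) i j : (Jm *m X) i j = sgnb (odd i) * X (pi i) j.
Proof.
rewrite mxE (sum_single (p := pi i)) => [|l nl]; rewrite JmE ?eqxx //.
by rewrite (negbTE nl) mul0r.
Qed.

Lemma Jm_mulR (X : 'M[R]_d) i j : (X *m Jm) i j = X i (pi j) * - sgnb (odd j).
Proof.
rewrite mxE (sum_single (p := pi j)) => [|l nl]; rewrite JmE' ?eqxx //.
by rewrite (negbTE nl) mulr0.
Qed.

Lemma Jm_tr : Jm^T = - Jm.
Proof.
apply/matrixP => i j; rewrite mxE [RHS]mxE JmE JmE'.
by case: eqP; rewrite ?opprK ?oppr0.
Qed.

Lemma JmJm : Jm *m Jm = - 1%:M.
Proof.
apply/matrixP => i j; rewrite Jm_mulL JmE' !mxE (inj_eq (can_inj piK)).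
case: eqP => [->|_]; last by rewrite mulr0 oppr0.
by rewrite /sgnb; case: (odd j); rewrite ?mulN1r ?mul1r ?opprK.
Qed.

Lemma QdE (nu : R -> R) x : Qd d nu x = cos (nu x) *: 1%:M + sin (nu x) *: Jm.
Proof.
apply/matrixP => i j; rewrite !mxE.
have e : (i == j) = ((i./2 == j./2)%N && (odd i == odd j)).
  rewrite -(inj_eq val_inj) /=.
  have hi := odd_double_half i; have hj := odd_double_half j.
  by case: (odd i) hi => hi; case: (odd j) hj => hj /=; lia.
rewrite e; case: (i./2 == j./2)%N; last by rewrite /= !mulr0 addr0.
rewrite /= -!(inj_eq val_inj) /= !inordK ?ltnS ?leq_b1 //.
case: (odd i); case: (odd j) => /=; rewrite /sgnb ?mulr1 ?mulr0 ?addr0 ?add0r //.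
by rewrite mulrN1.
Qed.


Lemma neqv (i j : 'I_d) : (i : nat) != j -> (i == j) = false.
Proof. by move=> h; apply/negbTE; apply: contra h => /eqP ->. Qed.

Lemma pi_lt2 k (i : 'I_d) : (i < k.*2)%N -> (pi i < k.*2)%N.
Proof.
rewrite piE; have hi := odd_double_half i.
by case: (odd i) hi => hi /=; lia.
Qed.

Section KSec.
Variable K : 'M[R]_d.
Hypothesis hK1 : K *m K^T = 1%:M.
Hypothesis hK2 : K^T = - K.

Lemma KK : K *m K = - 1%:M.
Proof. by rewrite -hK1 hK2 mulmxN opprK. Qed.

Lemma dot_skew u : dot u (u *m K) = 0.
Proof.
have h : dot u (u *m K) = - dot u (u *m K).
  by rewrite [LHS]dot_mulmx hK2 mulmxN dotNl dotC.
lra.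
Qed.

Lemma dot_KK u v : dot (u *m K) (v *m K) = dot u v.
Proof. by rewrite dot_mulmx -mulmxA hK1 mulmx1. Qed.

Definition Inv (W : 'M[R]_d) k :=
 [/\ forall i j : 'I_d, (i < k.*2)%N -> (j < k.*2)%N ->
       dot (row i W) (row j W) = (i == j)%:R,
     forall i : 'I_d, (k.*2 <= i)%N -> row i W = 0 &
     forall i : 'I_d, ~~ odd i -> (i < k.*2)%N -> row (pi i) W = row i W *m K].

Lemma Inv_rowK W k (i : 'I_d) : Inv W k -> (i < k.*2)%N ->
  row i W *m K = sgnb (odd i) *: row (pi i) W.
Proof.
case=> _ _ hc hi; case oi: (odd i); last by rewrite hc ?oi // scale1r.
have ep : ~~ odd (pi i) by rewrite odd_pi oi.
have := hc (pi i) ep (pi_lt2 hi); rewrite piK => ->.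
by rewrite -mulmxA KK mulmxN mulmx1 scaleN1r.
Qed.

Lemma find_v (W : 'M[R]_d) (a : 'I_d) : row a W = 0 ->
  exists v : 'rV[R]_d, v != 0 /\ v *m W^T = 0.
Proof.
move=> ha.
have nu : W^T \notin unitmx.
  rewrite unitmx_tr; apply/negP => /mulmxV h.
  have := congr1 (row a) h; rewrite row_mul ha mul0mx => /rowP/(_ a).
  by rewrite !mxE eqxx /= => /eqP; rewrite eq_sym oner_eq0.
have : kermx W^T != 0 by rewrite kermx_eq0 row_free_unit.
case: (pselect (exists j, row j (kermx W^T) != 0)) => [[j hj] _|H].
  by exists (row j (kermx W^T)); split => //; rewrite -row_mul mulmx_ker row0.
move=> /negP []; apply/eqP/row_matrixP => j; rewrite row0.
by apply/eqP; apply: contrapT => hj; apply: H; exists j; apply/negP.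
Qed.


Lemma Inv_step W k : Inv W k -> (k.+1.*2 <= d)%N -> exists W', Inv W' k.+1.
Proof.
move=> hI hk; have hI' := hI; case: hI' => ha hb hc.
have alt : (k.*2 < d)%N by lia.
pose a := Ordinal alt.
have va : (a : nat) = k.*2 by [].
have vpa : (pi a : nat) = k.*2.+1 by rewrite piE va odd_double.
have [v [vnz vW]] := find_v (hb a (leqnn _)).
pose s := Num.sqrt (dot v v).
have dpos := dot_gt0 vnz.
have spos : 0 < s by rewrite sqrtr_gt0.
pose v' := s^-1 *: v.
pose w := v' *m K.
have F1 : forall i : 'I_d, (i < k.*2)%N -> dot (row i W) v' = 0.
  by move=> i _; rewrite dotC dotZl -rowv_dot vW mxE mulr0.
have F2 : forall i : 'I_d, (i < k.*2)%N -> dot (row i W) w = 0.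
  move=> i hi; rewrite /w dot_mulmx hK2 mulmxN dotNl (Inv_rowK hI hi).
  by rewrite dotZl F1 ?pi_lt2 // mulr0 oppr0.
have F3 : dot v' v' = 1.
  rewrite dotZl dotC dotZl -[dot v v]sqr_sqrtr ?ltW // -/s.
  by field; rewrite gt_eqF.
have F4 : dot v' w = 0 by rewrite dot_skew.
have F5 : dot w w = 1 by rewrite dot_KK.
pose W' := \matrix_(i, j) (if i == a then v' 0 j else if i == pi a then w 0 j else W i j).
have rW' : forall i, row i W' = if i == a then v' else if i == pi a then w else row i W.
  move=> i; apply/rowP => j; rewrite !mxE.
  by case: (i == a); case: (i == pi a); rewrite ?mxE.
have split_lt : forall i : 'I_d, (i < k.+1.*2)%N -> [\/ (i < k.*2)%N, i = a | i = pi a].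
  move=> i hi; case: (ltnP i k.*2) => h; first by constructor 1.
  case: (i =P a) => [->|nia]; first by constructor 2.
  constructor 3; apply: val_inj; change (nat_of_ord i = nat_of_ord (pi a)); rewrite vpa.
  have : (i : nat) != a by apply: contra_not_neq nia => /val_inj.
  rewrite va; lia.
have lt_ne : forall i : 'I_d, (i < k.*2)%N -> (i == a) = false /\ (i == pi a) = false.
  by move=> i hi; split; apply: neqv; rewrite ?va ?vpa; lia.
have pa_ne : (pi a == a) = false by apply: neqv; rewrite va vpa; lia.
exists W'; split.
- move=> i j /split_lt[hi|->|->] /split_lt[hj|->|->]; rewrite !rW' ?eqxx ?pa_ne //=.
  + by case: (lt_ne _ hi) => -> ->; case: (lt_ne _ hj) => -> ->; apply: ha.
  + by case: (lt_ne _ hi) => -> ->; rewrite F1 // eq_sym (proj1 (lt_ne _ hi)).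
  + by case: (lt_ne _ hi) => -> ->; rewrite F2 // eq_sym (proj2 (lt_ne _ hi)).
  + by case: (lt_ne _ hj) => -> ->; rewrite dotC F1 // eq_sym (proj1 (lt_ne _ hj)).
  + by rewrite eq_sym pa_ne F4.
  + by case: (lt_ne _ hj) => -> ->; rewrite dotC F2 // eq_sym (proj2 (lt_ne _ hj)).
  + by rewrite dotC F4.
- move=> i hi; rewrite rW' !neqv ?va ?vpa; try lia.
  by apply: hb; lia.
- move=> i ei /split_lt[hi|->|e].
  + have hpi := pi_lt2 hi.
    rewrite !rW'; case: (lt_ne _ hi) => -> ->; case: (lt_ne _ hpi) => -> ->.
    exact: hc.
  + by rewrite !rW' eqxx pa_ne eqxx.
  + by move: ei; rewrite e odd_pi va odd_double.
Qed.

Lemma Inv_all k : (k.*2 <= d)%N -> exists W, Inv W k.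
Proof.
elim: k => [|k IH] hk.
  exists 0; split => [i j|i _|i _]; rewrite ?ltn0 ?row0 //.
have [W hW] : exists W, Inv W k by apply: IH; lia.
exact: Inv_step hW hk.
Qed.


Lemma Inv_final W : Inv W (d./2) -> W *m W^T = 1%:M /\ K *m W^T = W^T *m Jm.
Proof.
move=> hI; have hI' := hI; case: hI' => ha hb hc.
have e2 : (d./2).*2 = d by have := odd_double_half d; rewrite (negbTE hd).
split; apply/matrixP => i j.
  by rewrite mx_dot ha ?e2 // mxE.
rewrite Jm_mulR mxE.
have -> : \sum_l K i l * W^T l j = (row j W *m K^T) 0 i.
  by rewrite mxE; apply: eq_bigr => l _; rewrite !mxE mulrC.
rewrite hK2 mulmxN (Inv_rowK hI) ?e2 // !mxE.
by rewrite mulrN mulrC.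
Qed.

End KSec.

End Main.

Lemma conj_lin (R : realType) n (X Y J : 'M[R]_n) (c s : R) : X *m Y = 1%:M ->
  X *m (c *: 1%:M + s *: J) *m Y = c *: 1%:M + s *: (X *m J *m Y).
Proof.
by move=> h; rewrite mulmxDr mulmxDl -!scalemxAr -!scalemxAl mulmx1 h.
Qed.

Theorem mainTheorem10 (R : realType) (d : nat) (nu : R -> R) (A : 'M[R]_d) :
  ~~ odd d ->
  (forall x y : R, nu (x + y) = nu x + nu y) ->
  A \in unitmx ->
  (forall x : R, 0 <= x -> orthogonal_mx (A *m Qd d nu x *m invmx A)) ->
  exists U : 'M[R]_d, orthogonal_mx U /\
    forall x : R, 0 <= x -> A *m Qd d nu x *m invmx A = U *m Qd d nu x *m U^T.
Proof.
move=> hd _ hA hS.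
have hAB : A *m invmx A = 1%:M by apply: mulmxV.
have hBA : invmx A *m A = 1%:M by apply: mulVmx.
set B := invmx A in hAB hBA hS *.
case: (pselect (exists x, 0 <= x /\ sin (nu x) != 0)) => [[x0 [hx0 hs0]]|H]; last first.
  exists 1%:M; split; first by rewrite /orthogonal_mx trmx1 mulmx1.
  move=> x hx; have s0 : sin (nu x) = 0.
    by apply/eqP; apply: contrapT => h; apply: H; exists x; split => //; apply/negP.
  rewrite (QdE hd) s0 scale0r addr0 scalemx1 mul_mx_scalar -scalemxAl hAB.
  by rewrite trmx1 mulmx1 mul1mx scalemx1.
set c0 := cos (nu x0); set s0 := sin (nu x0).
set Q0 := c0 *: 1%:M + s0 *: Jm R d.
have hQ : Qd d nu x0 = Q0 by rewrite (QdE hd).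
set M := A^T *m A.
have QT : Q0^T = c0 *: 1%:M - s0 *: Jm R d.
  by rewrite /Q0 raddfD /= !linearZ /= trmx1 (@Jm_tr R d hd) scalerN.
have QQT : Q0 *m Q0^T = 1%:M.
  rewrite QT /Q0 mulmxDl !mulmxDr !mulmxN -!scalemxAl -!scalemxAr !mul1mx !mulmx1.
  rewrite (@JmJm R d hd); apply/matrixP => i j; rewrite !mxE.
  have := cos2Dsin2 (nu x0); rewrite -/c0 -/s0 => hcs.
  set J := Jm R d i j; set e := (i == j)%:R.
  rewrite -[RHS]mul1r -hcs; ring.
have hST : (A *m Q0 *m B)^T *m (A *m Q0 *m B) = 1%:M.
  by apply: mulmx1C; have := hS x0 hx0; rewrite /orthogonal_mx hQ.
have hM : Q0^T *m M *m Q0 = M.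
  have := congr1 (fun X => A^T *m X *m A) hST; rewrite /= mulmx1.
  rewrite !trmx_mul !mulmxA -trmx_mul hBA trmx1 mul1mx -!mulmxA hBA mulmx1.
  by move=> ->.
have hMQ : M *m Q0 = Q0 *m M.
  by rewrite -{1}[M]mul1mx -QQT -(mulmxA Q0) -mulmxA hM.
have hMJ : M *m Jm R d = Jm R d *m M.
  move: hMQ; rewrite /Q0 mulmxDr mulmxDl -!scalemxAr -!scalemxAl mulmx1 mul1mx.
  by move=> /addrI /(scalerI hs0).
set K := A *m Jm R d *m B.
have hKTK : K^T *m K = 1%:M.
  have -> : K^T *m K = B^T *m ((Jm R d)^T *m (M *m Jm R d)) *m B.
    by rewrite /K /M !trmx_mul !mulmxA.
  rewrite hMJ mulmxA (@Jm_tr R d hd) mulNmx (@JmJm R d hd) ?scalar_mxN opprK mul1mx.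
  by rewrite /M mulmxA -trmx_mul -mulmxA hAB trmx1 mul1mx.
have hKKT : K *m K^T = 1%:M by apply: mulmx1C.
have hKK : K *m K = - 1%:M.
  have -> : K *m K = A *m Jm R d *m (B *m A) *m Jm R d *m B by rewrite /K !mulmxA.
  by rewrite hBA mulmx1 -(mulmxA A) (@JmJm R d hd) mulmxN mulmx1 mulNmx hAB.
have hKT : K^T = - K.
  by rewrite -[K^T]mulmx1 -[1%:M]opprK -hKK mulmxN mulmxA hKTK mul1mx.
have hle : ((d./2).*2 <= d)%N by rewrite -{2}(odd_double_half d) leq_addl.
have [W hW] := @Inv_all R d hd K hKKT hKT (d./2) hle.
have [WWT KW] := @Inv_final R d hd K hKKT hKT W hW.
have WTW : W^T *m W^T^T = 1%:M by rewrite trmxK; apply: mulmx1C.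
exists W^T; split => // x hx.
rewrite (QdE hd) !conj_lin //.
by rewrite -KW -(mulmxA K) WTW mulmx1.
Qed.
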